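(* Let $b>1$ be an integer and let $H$ be a generalized $b$-happy function with digit mean $\mu$ and digit standard deviation $\sigma$. Let $n$ be a positive integer with $4\mid n$ and let $C\subseteq\mathbb{Z}_{\ge 0}$. Given $\lambda>0$, let $$J_{n,\lambda}=\left[1+\tfrac34 n\mu+\lambda\sigma\sqrt{\tfrac34 n},\ \tfrac14 n+\tfrac34 n\mu-\lambda\sigma\sqrt{\tfrac34 n}\right].$$ Suppose there is a nonempty integer interval $I\subseteq J_{n,\lambda}$ with type-$C$ density $d$. Then there exists an $n$-strict interval $I_2$ whose type-$C$ density is at least $$\left(1-\frac{1}{\lambda^2}\right)\frac{d}{1+\frac{\sqrt{3n}\,\sigma\lambda}{|I|}}.$$
   Context: A generalized $b$-happy function: fix an integer $b>1$ and non-negative integers $h(0),\dots,h(b-1)$ with $h(0)=0$, $h(1)=1$; for $n=\sum_{i=0}^k a_ib^i$ in base $b$, $H(n)=\sum_{i=0}^k h(a_i)$. Digit mean $\mu=\frac1b\sum_{j=0}^{b-1}h(j)$, digit variance $\sigma^2=\frac1b\sum_{j=0}^{b-1}(h(j)-\mu)^2$. For $C\subseteq\mathbb{Z}_{\ge0}$, an integer $n$ is type-$C$ if $H^k(n)\in C$ for some integer $k\ge0$. An integer interval $[a,c]$ ($a,c$ real) is the set of integers $x$ with $a\le x\le c$; $|I|$ is its cardinality. The type-$C$ density of a finite nonempty integer interval $I$ is $|\{n\in I:n\text{ type-}C\}|/|I|$. An integer interval $I$ is $n$-strict if $I\subseteq[b^{n-1},b^n-1]$ and $|I|=b^{3n/4}$.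 *)

(* Defs.v *)
From HB Require Import structures.
From mathcomp Require Import all_boot all_order all_algebra.
From mathcomp Require Import boolp classical_sets reals.
Set Implicit Arguments. Unset Strict Implicit. Unset Printing Implicit Defensive.
Import Order.TTheory GRing.Theory Num.Theory.
Local Open Scope ring_scope.

(* Generalized b-happy function: H(n) = sum of h(a_i) over the base-b digits
   a_0, ..., a_k of n (k = trunc_log b n; for n = 0 this is h 0 = 0). *)
Definition happyH (b : nat) (h : nat -> nat) (n : nat) : nat :=
  (\sum_(i < (trunc_log b n).+1) h ((n %/ b ^ i) %% b))%N.

Definition digit_mean (R : realType) (b : nat) (h : nat -> nat) : R :=
  (\sum_(j < b) (h j)%:R) / b%:R.
Definition digit_var (R : realType) (b : nat) (h : nat -> nat) : R :=
  (\sum_(j < b) ((h j)%:R - digit_mean R b h) ^+ 2) / b%:R.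
Definition digit_sd (R : realType) (b : nat) (h : nat -> nat) : R :=
  Num.sqrt (digit_var R b h).

Definition typeC (b : nat) (h : nat -> nat) (C : set nat) (m : nat) : Prop :=
  exists k : nat, C (iter k (happyH b h) m).

(* The integer interval [lo, hi] (lo <= hi) of naturals; its cardinality *)
Definition icard (lo hi : nat) : nat := (hi.+1 - lo)%N.

Definition count_typeC (b : nat) (h : nat -> nat) (C : set nat) (lo hi : nat) : nat :=
  #|[set i : 'I_hi.+1 | (lo <= i)%N && `[< typeC b h C i >]]|.

Definition densityC (R : realType) (b : nat) (h : nat -> nat) (C : set nat)
  (lo hi : nat) : R :=
  (count_typeC b h C lo hi)%:R / (icard lo hi)%:R.

(* [lo, hi] is n-strict: contained in [b^(n-1), b^n - 1] with cardinality b^(3n/4)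
   (used with 4 | n, so 3n/4 = (3*n) %/ 4 exactly). *)
Definition n_strict (b n lo hi : nat) : Prop :=
  (lo <= hi)%N /\ (b ^ n.-1 <= lo)%N /\ (hi <= b ^ n - 1)%N /\
  icard lo hi = (b ^ ((3 * n) %/ 4))%N.

(* Main.v *)
Require Import Defs.
From HB Require Import structures.
From mathcomp Require Import all_boot all_order all_algebra.
From mathcomp Require Import boolp classical_sets reals.
From mathcomp Require Import ring lra zify.
Import Order.TTheory GRing.Theory Num.Theory.

Definition Dg (b : nat) (h : nat -> nat) (k m : nat) : nat :=
  (\sum_(i < k) h ((m %/ b ^ i) %% b))%N.

Lemma Dg0 b h m : Dg b h 0 m = 0%N.
Proof. by rewrite /Dg big_ord0. Qed.

Lemma DgS b h k m : Dg b h k.+1 m = (h (m %% b) + Dg b h k (m %/ b))%N.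
Proof.
rewrite /Dg big_ord_recl /= expn0 divn1; congr (_ + _)%N.
by apply: eq_bigr => i _; rewrite /bump /= add1n expnS divnMA.
Qed.

Lemma Dg_zero b h k : h 0%N = 0%N -> Dg b h k 0 = 0%N.
Proof. by move=> h0; rewrite /Dg big1 // => i _; rewrite div0n mod0n. Qed.

Lemma Dsplit b h a k x y : (1 < b)%N -> h 0%N = 0%N -> (y < b ^ k)%N ->
  Dg b h (k + a) (x * b ^ k + y) = (Dg b h k y + Dg b h a x)%N.
Proof.
move=> b1 h0; elim: k y => [|k IH] y Hy.
  rewrite expn0 in Hy; have -> : y = 0%N by lia.
  by rewrite Dg0 add0n expn0 muln1 addn0.
have b0 : (0 < b)%N by lia.
rewrite addSn !DgS expnSr mulnA modnMDl divnMDl // IH ?addnA //.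
by rewrite ltn_divLR // -expnSr.
Qed.

Lemma Dext b h j k m : (1 < b)%N -> h 0%N = 0%N -> (m < b ^ j)%N -> (j <= k)%N ->
  Dg b h k m = Dg b h j m.
Proof.
move=> b1 h0 Hm Hjk; rewrite -(subnKC Hjk).
have := @Dsplit b h (k - j) j 0 m b1 h0 Hm; rewrite mul0n add0n => ->.
by rewrite Dg_zero // addn0.
Qed.

Lemma happyH_Dg b h k m : (1 < b)%N -> h 0%N = 0%N -> (m < b ^ k)%N ->
  happyH b h m = Dg b h k m.
Proof.
move=> b1 h0 Hm; rewrite /happyH -/(Dg b h _ m).
have Ht := trunc_log_ltn m b1.
case: (leqP k (trunc_log b m).+1) => Hk.
  by apply: Dext.
by symmetry; apply: Dext => //; apply: ltnW.
Qed.

Fixpoint ru (b k : nat) : nat := if k is k'.+1 then (1 + b * ru b k')%N else 0%N.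

Lemma ru_lt b k : (1 < b)%N -> (ru b k < b ^ k)%N.
Proof.
move=> b1; elim: k => [|k IH] /=; first by rewrite expn0.
rewrite expnS; nia.
Qed.

Lemma Dg_ru b h j k : (1 < b)%N -> h 0%N = 0%N -> h 1%N = 1%N -> (k <= j)%N ->
  Dg b h j (ru b k) = k.
Proof.
move=> b1 h0 h1; elim: k j => [|k IH] j Hkj /=; first by rewrite Dg_zero.
case: j Hkj => [|j] // Hkj.
have b0 : (0 < b)%N by lia.
rewrite DgS (addnC 1%N) (mulnC b) modnMDl divnMDl // (modn_small b1) (divn_small b1) addn0 h1 IH //.
Qed.

Local Open Scope ring_scope.

Lemma sumsplit (R : realType) (F : nat -> R) M b :
  \sum_(0 <= y < M * b) F y = \sum_(0 <= y' < M) \sum_(0 <= d < b) F (y' * b + d)%N.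
Proof.
elim: M => [|M IH]; first by rewrite mul0n !big_geq.
rewrite mulSnr (@big_cat_nat _ _ _ (M * b)) //= ?leq_addr // IH big_nat_recr //=.
congr (_ + _).
have := @big_addn _ 0 +%R 0 (M * b + b) (M * b) xpredT F; rewrite add0n => ->.
rewrite addKn; apply: eq_bigr => i _; by rewrite addnC.
Qed.

Lemma sum_dev0 (R : realType) b (h : nat -> nat) : (0 < b)%N ->
  \sum_(j < b) ((h j)%:R - digit_mean R b h) = 0.
Proof.
move=> b0; rewrite sumrB sumr_const card_ord /digit_mean -[_ *+ b]mulr_natr divfK ?subrr // pnatr_eq0 -lt0n //.
Qed.

Lemma sum_dev2 (R : realType) b (h : nat -> nat) : (0 < b)%N ->
  \sum_(j < b) ((h j)%:R - digit_mean R b h) ^+ 2 = b%:R * digit_var R b h.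
Proof.
move=> b0; rewrite /digit_var mulrC divfK // pnatr_eq0 -lt0n //.
Qed.

Lemma var_lemma (R : realType) b (h : nat -> nat) L : (1 < b)%N -> h 0%N = 0%N ->
  \sum_(0 <= y < b ^ L) ((Dg b h L y)%:R - L%:R * digit_mean R b h) ^+ 2
   = (b ^ L)%:R * (L%:R * digit_var R b h).
Proof.
move=> b1 h0; have b0 : (0 < b)%N by lia.
elim: L => [|L IH].
  rewrite expn0 big_nat1 Dg0 !mul0r subrr expr0n /=; by rewrite mulr0.
rewrite expnSr sumsplit.
have E : forall y', \sum_(0 <= d < b) ((Dg b h L.+1 (y' * b + d))%:R - L.+1%:R * digit_mean R b h) ^+ 2
   = b%:R * digit_var R b h + b%:R * ((Dg b h L y')%:R - L%:R * digit_mean R b h) ^+ 2.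
  move=> y'.
  rewrite big_mkord.
  have -> : \sum_(i < b) ((Dg b h L.+1 (y' * b + i))%:R - L.+1%:R * digit_mean R b h) ^+ 2 =
     \sum_(i < b) ((((h i)%:R - digit_mean R b h) ^+ 2 + ((Dg b h L y')%:R - L%:R * digit_mean R b h) ^+ 2) + (((Dg b h L y')%:R - L%:R * digit_mean R b h) * ((h i)%:R - digit_mean R b h)) *+ 2).
    apply: eq_bigr => i _.
    rewrite DgS modnMDl divnMDl // (modn_small (ltn_ord i)) (divn_small (ltn_ord i)) addn0.
    rewrite natrD -addn1 natrD; ring.
  rewrite !big_split /= sum_dev2 // sumr_const card_ord -mulr_sumr sum_dev0 //; ring.
rewrite (eq_bigr _ (fun y' _ => E y')).
rewrite big_split -!mulr_sumr IH sumr_const_nat subn0.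
rewrite !natrM -[L.+1]addn1 natrD -[_ *+ (b ^ L)]mulr_natr.
have bn0 : (b%:R : R) != 0 by rewrite pnatr_eq0 -lt0n.
rewrite sum_dev2 //=. move: (digit_var R b h) (b%:R : R) ((b ^ L)%:R : R) (L%:R : R) bn0 => V B BL LL bn0. field; done.
Qed.

Lemma var_ge0 (R : realType) b (h : nat -> nat) : 0 <= digit_var R b h.
Proof.
rewrite /digit_var divr_ge0 // ?ler0n // sumr_ge0 // => i _; exact: sqr_ge0.
Qed.

Definition goodD (R : realType) b (h : nat -> nat) L (lam : R) (y : nat) : bool :=
  `|(Dg b h L y)%:R - L%:R * digit_mean R b h| <= lam * digit_sd R b h * Num.sqrt L%:R.

Lemma cheb (R : realType) b (h : nat -> nat) L (lam : R) : (1 < b)%N -> h 0%N = 0%N ->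
  0 < lam -> (0 < L)%N ->
  (b ^ L)%:R * (1 - 1 / lam ^+ 2) <=
  (\sum_(y < b ^ L) (goodD R b h L lam y : nat))%:R.
Proof.
move=> b1 h0 lam0 L0.
set N := (b ^ L)%N.
set X := fun y : nat => (Dg b h L y)%:R - L%:R * digit_mean R b h.
set w := lam * digit_sd R b h * Num.sqrt L%:R.
set V := digit_var R b h.
have V0 : 0 <= V by apply: var_ge0.
have w0 : 0 <= w by rewrite /w /digit_sd !mulr_ge0 ?sqrtr_ge0 // ltW.
have Hw2 : w ^+ 2 = lam ^+ 2 * (L%:R * V).
  rewrite /w !exprMn /digit_sd !sqr_sqrtr // ?ler0n; rewrite /V; ring.
have HS : \sum_(y < N) X y ^+ 2 = N%:R * (L%:R * V).
  by rewrite -(@var_lemma R b h L b1 h0) big_mkord.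
have Hsplit : forall y : 'I_N, (1 = ((goodD R b h L lam y) : nat) + ((~~ (goodD R b h L lam y)) : nat))%N.
  by move=> y; case: (goodD R b h L lam y).
have HN : (\sum_(y < N) ((goodD R b h L lam y) : nat) + \sum_(y < N) ((~~ (goodD R b h L lam y)) : nat) = N)%N.
  by rewrite -big_split /= -[in RHS](card_ord N) -sum1_card; apply: eq_bigr => y _; rewrite -Hsplit.
set ng := (\sum_(y < N) _)%N in HN *.
set nb := (\sum_(y < N) _)%N in HN.
have Hb : nb%:R * w ^+ 2 <= N%:R * (L%:R * V).
  rewrite -HS /nb natr_sum mulr_suml; apply: ler_sum => y _.
  case: (boolP (goodD R b h L lam y)) => Hy /=; first by rewrite mul0r sqr_ge0.
  rewrite /goodD -/(X y) -/w in Hy.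
  rewrite mul1r -[X y ^+ 2]real_normK ?num_real //.
  rewrite -ltNge in Hy; nra.
have -> : ng = (N - nb)%N by lia.
rewrite natrB; last by lia.
have LV : 0 <= L%:R * V by rewrite mulr_ge0 ?ler0n.
case: (boolP (0 < L%:R * V)) => HLV.
  rewrite Hw2 in Hb.
  have : nb%:R * lam ^+ 2 <= N%:R.
    rewrite -(ler_pM2r HLV); move: Hb; by rewrite mulrA.
  move=> H; have l2 : 0 < lam ^+ 2 by rewrite exprn_gt0.
  rewrite mulrBr mulr1 lerB // mulrA mulr1 ler_pdivlMr //.
have V00 : L%:R * V = 0 by move: HLV; rewrite lt_neqAle LV andbT negbK eq_sym => /eqP.
have -> : nb = 0%N.
  rewrite /nb big1 // => y _.
  have := @psumr_eq0P R _ xpredT (fun y : 'I_N => X y ^+ 2) (fun i _ => sqr_ge0 _).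
  rewrite HS V00 mulr0 => /(_ erefl y erefl) /eqP; rewrite sqrf_eq0 => /eqP HX.
  by rewrite /goodD -/(X y) -/w HX normr0 w0.
rewrite subr0; have l2 : 0 < lam ^+ 2 by rewrite exprn_gt0.
rewrite ler_piMr ?ler0n // lerBlDr lerDl divr_ge0 // ltW //.
Qed.

Local Close Scope ring_scope.

Lemma shift_sum (F : nat -> nat) a e s :
  (\sum_(a <= t < e) F (t + s) = \sum_(a + s <= x < e + s) F x)%N.
Proof. by rewrite big_addn addnK. Qed.

Lemma subrange (F : nat -> nat) a c d e : (a <= c -> c <= d -> d <= e ->
  \sum_(c <= i < d) F i <= \sum_(a <= i < e) F i)%N.
Proof.
move=> ac cd de.
rewrite (@big_cat_nat _ _ _ c a e) //; last by lia.
rewrite (@big_cat_nat _ _ _ d c e) //.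
rewrite /=; lia.
Qed.

Lemma pigeon (f : nat -> nat) tA tB M : (tA <= tB)%N ->
  (M <= \sum_(tA <= t < tB.+1) f t)%N ->
  exists t, [/\ (tA <= t)%N, (t <= tB)%N & (M <= f t * (tB.+1 - tA))%N].
Proof.
move=> AB HM; apply: contrapT => Hn.
have Hall : forall t, (tA <= t < tB.+1)%N -> (f t * (tB.+1 - tA) < M)%N.
  move=> t /andP[H1 H2]; rewrite ltnNge; apply/negP => H3; apply: Hn.
  by exists t; split.
have M0 : (0 < M)%N by have := Hall tA; lia.
have : (\sum_(tA <= t < tB.+1) f t * (tB.+1 - tA) <= \sum_(tA <= t < tB.+1) (M - 1))%N.
  rewrite big_nat_cond [X in (_ <= X)%N]big_nat_cond.
  apply: leq_sum => t /andP[Ht _]; have := Hall t Ht; lia.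
rewrite -big_distrl /= sum_nat_const_nat => H.
have : (M * (tB.+1 - tA) <= (\sum_(tA <= t < tB.+1) f t) * (tB.+1 - tA))%N by apply: leq_mul.
set S := (\sum_(_ <= _ < _) _)%N in H *; nia.
Qed.

Lemma count_sum b h C lo hi : (lo <= hi.+1)%N ->
  count_typeC b h C lo hi = (\sum_(lo <= x < hi.+1) `[< typeC b h C x >])%N.
Proof.
move=> H; rewrite /count_typeC -sum1_card big_mkcond /=.
rewrite (eq_bigr (fun i : 'I_hi.+1 => ((lo <= i)%N && `[< typeC b h C i >] : nat))); last first.
  by move=> i _; rewrite inE; case: ifP.
rewrite -(big_mkord xpredT (fun i => ((lo <= i)%N && `[< typeC b h C i >] : nat))).
rewrite (@big_cat_nat _ _ _ lo) //= big_nat_cond big1 ?add0n; last first.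
  by move=> i /andP[/andP[_ Hi] _]; rewrite leqNgt Hi.
by apply: eq_big_nat => i /andP[Hi _]; rewrite Hi.
Qed.

Lemma asbool_leq (A B : Prop) : (A -> B) -> (`[< A >] <= `[< B >])%N.
Proof. by move=> AB; case: (asboolP A) => a; case: (asboolP B) => // /(_ (AB a)). Qed.

Lemma typeC_H b h C m : typeC b h C (happyH b h m) -> typeC b h C m.
Proof. by move=> [k Hk]; exists k.+1; rewrite iterSr. Qed.

Definition top b q t := (1 * b ^ q.-1 + ru b t.-1)%N.

Lemma top_bounds b q t : (1 < b)%N -> (0 < t)%N -> (t <= q)%N ->
  (b ^ q.-1 <= top b q t)%N /\ (top b q t < b ^ q)%N.
Proof.
move=> b1 t0 tq; rewrite /top mul1n; split; first exact: leq_addr.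
have H1 := @ru_lt b t.-1 b1.
have H2 : (b ^ t.-1 <= b ^ q.-1)%N by rewrite leq_pexp2l //; [lia | lia].
have H3 : (b ^ q = b * b ^ q.-1)%N by rewrite -expnS; congr (_ ^ _); lia.
rewrite H3; nia.
Qed.

Lemma top_Dg b h q t : (1 < b)%N -> h 0%N = 0%N -> h 1%N = 1%N -> (0 < t)%N -> (t <= q)%N ->
  Dg b h q (top b q t) = t.
Proof.
move=> b1 h0 h1 t0 tq.
have Hr : (ru b t.-1 < b ^ q.-1)%N.
  apply: (leq_trans (@ru_lt b t.-1 b1)); rewrite leq_pexp2l //; [lia | lia].
have := @Dsplit b h 1 q.-1 1 (ru b t.-1) b1 h0 Hr.
have -> : (q.-1 + 1 = q)%N by lia.
rewrite /top => ->; rewrite DgS Dg0 (modn_small b1) h1 (@Dg_ru b h q.-1 t.-1 b1 h0 h1) //; lia.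
Qed.

Lemma strict_ok b q T : (1 < b)%N -> (0 < q)%N -> (b ^ q.-1 <= T)%N -> (T < b ^ q)%N ->
  n_strict b (q * 4) (T * b ^ (3 * q)) (T * b ^ (3 * q) + b ^ (3 * q) - 1).
Proof.
move=> b1 q0 H1 H2.
have N0 : (0 < b ^ (3 * q))%N by rewrite expn_gt0; lia.
have E1 : (b ^ (q * 4).-1 = b ^ q.-1 * b ^ (3 * q))%N by rewrite -expnD; congr (_ ^ _); lia.
have E2 : (b ^ (q * 4) = b ^ q * b ^ (3 * q))%N by rewrite -expnD; congr (_ ^ _); lia.
set N := (b ^ (3 * q))%N in N0 E1 E2 *.
set B1 := (b ^ q.-1)%N in H1 E1. set B2 := (b ^ q)%N in H2 E2.
rewrite /n_strict /icard E1 E2; split; first by lia.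
split; first by apply: leq_mul.
split; first by nia.
have -> : (3 * (q * 4) %/ 4 = 3 * q)%N by rewrite mulnA mulnK.
rewrite -/N; lia.
Qed.

Lemma H_top b h q L T y : (1 < b)%N -> h 0%N = 0%N -> (T < b ^ q)%N -> (y < b ^ L)%N ->
  happyH b h (y + T * b ^ L) = (Dg b h L y + Dg b h q T)%N.
Proof.
move=> b1 h0 HT Hy.
rewrite addnC (@happyH_Dg b h (L + q)) //; first exact: Dsplit.
rewrite expnD; set N := (b ^ L)%N in Hy *; set B := (b ^ q)%N in HT *; nia.
Qed.

Lemma count_strict b h C T N : (0 < N)%N ->
  count_typeC b h C (T * N) (T * N + N - 1) =
  (\sum_(y < N) `[< typeC b h C (y + T * N) >])%N.
Proof.
move=> N0; rewrite count_sum; last by lia.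
have -> : ((T * N + N - 1).+1 = N + T * N)%N by lia.
by rewrite -(big_mkord xpredT (fun y => `[< typeC b h C (y + T * N) >] : nat)) (shift_sum (fun x => `[< typeC b h C x >] : nat) 0 N (T * N)) add0n.
Qed.

Local Open Scope ring_scope.

Lemma final_real (R : realType) (a c Ic s sd lam N ng K ct : R) :
  0 < a -> 0 < Ic -> 0 <= s -> 0 <= sd -> 0 < lam -> 0 < N -> 0 < K -> 0 <= c -> 0 <= ct ->
  K <= Ic + 2 * (lam * sd * s) -> N * a <= ng -> ng * c <= ct * K ->
  a * ((c / Ic) / (1 + 2 * s * sd * lam / Ic)) <= ct / N.
Proof.
move=> a0 Ic0 s0 sd0 l0 N0 K0 c0 ct0 HK Hng Hc.
have X0 : 0 <= 2 * s * sd * lam by rewrite !mulr_ge0 // ltW.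
set X := 2 * s * sd * lam in X0 *.
have Y0 : 0 < Ic + X by lra.
have -> : (c / Ic) / (1 + X / Ic) = c / (Ic + X).
  field; apply/andP; split; [lra| rewrite gt_eqF //].
rewrite mulrA ler_pdivrMr // mulrAC ler_pdivlMr //.
have HX : X = 2 * (lam * sd * s) by rewrite /X; ring.
rewrite HX in Y0 *; nra.
Qed.

Lemma pos_nat (R : realType) (x : R) (k : nat) : 0 < x -> x <= k%:R -> (0 < k)%N.
Proof. move=> x0 xk; rewrite -(ltr_nat R); exact: lt_le_trans x0 xk. Qed.

Lemma aux1 (R : realType) (a z w l : R) : 1 + z + w <= l -> a <= z + w -> a < l.
Proof. move=> *; lra. Qed.
Lemma aux2 (R : realType) (x q z w d : R) : x <= q + z - w -> z - w <= d -> x <= q + d.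
Proof. move=> *; lra. Qed.
Lemma aux3 (lo hi D1 D2 : nat) : (D2 <= D1 -> D1 < lo -> lo <= hi -> lo - D1 <= hi - D2)%N.
Proof. lia. Qed.

Lemma aux4 (lo D1 t : nat) : (D1 < lo -> lo - D1 <= t -> 0 < t)%N.
Proof. lia. Qed.
Lemma aux5 (hi q D2 t : nat) : (t < (hi - D2).+1 -> hi <= q + D2 -> t <= q)%N.
Proof. lia. Qed.
Lemma aux6 (lo hi D1 D2 Dy : nat) : (D2 <= Dy -> Dy <= D1 -> D1 < lo -> lo <= hi ->
  [/\ lo - D1 + Dy <= lo, lo <= hi.+1 & hi.+1 <= (hi - D2).+1 + Dy])%N.
Proof. move=> *; split; lia. Qed.
Lemma aux7 (T N : nat) : (0 < N -> (T * N + N - 1).+1 - T * N = N)%N.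
Proof. move=> H. set X := (T * N)%N. lia. Qed.
Lemma aux8 (lo hi D1 D2 : nat) : (D2 <= D1 -> D1 < lo -> lo <= hi ->
  ((hi - D2).+1 - (lo - D1)) + D2 = (hi.+1 - lo) + D1)%N.
Proof. lia. Qed.

Lemma aux9 (R : realType) (K D2 Ic D1 z w : R) :
  K + D2 = Ic + D1 -> D1 <= z + w -> z - w <= D2 -> K <= Ic + 2 * w.
Proof. move=> *; lra. Qed.

Theorem theorem3p3 (R : realType) (b : nat) (h : nat -> nat) (C : set nat)
  (n : nat) (lam : R) (lo hi : nat) :
  (1 < b)%N -> h 0%N = 0%N -> h 1%N = 1%N ->
  (0 < n)%N -> (4 %| n)%N -> 0 < lam ->
  (lo <= hi)%N ->
  1 + 3 / 4 * n%:R * digit_mean R b h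
    + lam * digit_sd R b h * Num.sqrt (3 / 4 * n%:R) <= lo%:R ->
  hi%:R <= n%:R / 4 + 3 / 4 * n%:R * digit_mean R b h
    - lam * digit_sd R b h * Num.sqrt (3 / 4 * n%:R) ->
  exists lo2 hi2 : nat, n_strict b n lo2 hi2 /\
    (1 - 1 / lam ^+ 2) *
      (densityC R b h C lo hi /
        (1 + Num.sqrt (3 * n%:R) * digit_sd R b h * lam / (icard lo hi)%:R))
    <= densityC R b h C lo2 hi2.
Proof.
move=> b1 h0 h1 n0 n4 lam0 lohi Hlo Hhi.
have [q nq] : exists q, n = (q * 4)%N by exists (n %/ 4)%N; rewrite divnK.
subst n. have q0 : (0 < q)%N by lia.
have eL : 3 / 4 * (q * 4)%:R = (3 * q)%:R :> R by rewrite !natrM; field.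
have e4 : (q * 4)%:R / 4 = q%:R :> R by rewrite natrM; field.
have e3 : Num.sqrt (3 * (q * 4)%:R) = 2 * Num.sqrt (3 * q)%:R :> R.
  have -> : 3 * (q * 4)%:R = 2 ^+ 2 * (3 * q)%:R :> R by rewrite !natrM; ring.
  by rewrite sqrtrM ?sqr_ge0 // sqrtr_sqr ger0_norm.
rewrite eL in Hlo Hhi; rewrite e4 in Hhi; rewrite e3.
have L0 : (0 < 3 * q)%N by lia.
set L := (3 * q)%N in Hlo Hhi L0 *.
set N := (b ^ L)%N.
have N0 : (0 < N)%N by rewrite expn_gt0; lia.
set mu := digit_mean R b h in Hlo Hhi *.
set sd := digit_sd R b h in Hlo Hhi *.
set w := lam * sd * Num.sqrt L%:R in Hlo Hhi.
have sd0 : 0 <= sd by rewrite /sd /digit_sd sqrtr_ge0.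
have w0 : 0 <= w by rewrite /w !mulr_ge0 ?sqrtr_ge0 // ltW.
have Ic0 : (0 < icard lo hi)%N by rewrite /icard; lia.
have Hstrict : forall t, (0 < t)%N -> (t <= q)%N ->
    n_strict b (q * 4) (top b q t * N) (top b q t * N + N - 1).
  move=> t t0 tq; have [H1 H2] := @top_bounds b q t b1 t0 tq; exact: strict_ok.
have dens_ge0 : forall lo2 hi2, 0 <= densityC R b h C lo2 hi2.
  by move=> *; rewrite /densityC divr_ge0 // ler0n.
case: (boolP (0 < 1 - 1 / lam ^+ 2)) => Ha; last first.
  exists (top b q 1 * N), (top b q 1 * N + N - 1)%N; split; first exact: Hstrict.
  apply: (le_trans _ (dens_ge0 _ _)); apply: mulr_le0_ge0; first by rewrite leNgt.
  by rewrite divr_ge0 ?dens_ge0 // addr_ge0 // divr_ge0 ?ler0n // !mulr_ge0 ?sqrtr_ge0 ?ler0n // ltW.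
have Hcheb := @cheb R b h L lam b1 h0 lam0 L0.
rewrite -/N -/mu -/sd in Hcheb.
set ng := (\sum_(y < N) _)%N in Hcheb.
have ng0 : (0 < ng)%N.
  have NR : (0 : R) < N%:R by rewrite ltr0n.
  exact: (@pos_nat R _ _ (mulr_gt0 NR Ha) Hcheb).
have [y0 Hy0] : exists y0 : 'I_N, goodD R b h L lam y0.
  apply: contrapT => Hn; move: ng0; rewrite /ng big1 // => y _.
  have -> // : goodD R b h L lam y = false.
  by apply/negP => Hg; apply: Hn; exists y.
have Gb : forall y : nat, goodD R b h L lam y ->
    L%:R * mu - w <= (Dg b h L y)%:R <= L%:R * mu + w.
  move=> y; rewrite /goodD -/mu -/sd -/w ler_norml => /andP[A B]; apply/andP; split; lra.
case: (@arg_maxnP _ y0 (fun i : 'I_N => goodD R b h L lam i) (fun i : 'I_N => Dg b h L i) Hy0) => y1 Hy1 Hmax.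
case: (@arg_minnP _ y0 (fun i : 'I_N => goodD R b h L lam i) (fun i : 'I_N => Dg b h L i) Hy0) => y2 Hy2 Hmin.
have [G1a G1b] := andP (Gb _ Hy1). have [G2a G2b] := andP (Gb _ Hy2).
set D1 := Dg b h L y1 in G1a G1b Hmax. set D2 := Dg b h L y2 in G2a G2b Hmin.
have D12 : (D2 <= D1)%N := leq_trans (Hmin _ Hy0) (Hmax _ Hy0).
have D1lo : (D1 < lo)%N by rewrite -(ltr_nat R); exact: aux1 Hlo G1b.
have hiD2 : (hi <= q + D2)%N by rewrite -(ler_nat R) natrD; exact: aux2 Hhi G2a.
set tA := (lo - D1)%N. set tB := (hi - D2)%N.
have AB : (tA <= tB)%N by exact: aux3.
have Hct : forall t, (0 < t)%N -> (t <= q)%N -> forall y : 'I_N,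
    ((goodD R b h L lam y && `[< typeC b h C (t + Dg b h L y) >] : nat)
      <= `[< typeC b h C (y + top b q t * N) >])%N.
  move=> t t0 tq y; case: (goodD R b h L lam y) => //=.
  apply: asbool_leq => HC; apply: typeC_H.
  have [_ HT] := @top_bounds b q t b1 t0 tq.
  by rewrite (@H_top b h q L _ _ b1 h0 HT (ltn_ord y)) (@top_Dg b h q t b1 h0 h1 t0 tq) addnC.
have Hsum : (ng * count_typeC b h C lo hi <=
   \sum_(tA <= t < tB.+1) \sum_(y < N) `[< typeC b h C (y + top b q t * N) >])%N.
  apply: (@leq_trans (\sum_(tA <= t < tB.+1) \sum_(y < N)
     (goodD R b h L lam y && `[< typeC b h C (t + Dg b h L y) >] : nat))); last first.
    rewrite big_nat_cond [X in (_ <= X)%N]big_nat_cond.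
    apply: leq_sum => t /andP[/andP[Ht1 Ht2] _]; apply: leq_sum => y _; apply: Hct.
      exact: (@aux4 _ _ _ D1lo Ht1).
    exact: (@aux5 _ _ _ _ Ht2 hiD2).
  rewrite exchange_big /= /ng big_distrl /=; apply: leq_sum => y _.
  case: (boolP (goodD R b h L lam y)) => Hg /=; last by rewrite mul0n.
  rewrite mul1n (shift_sum (fun x => `[< typeC b h C x >] : nat)) count_sum; last exact: leqW.
  have := Hmax y Hg; have := Hmin y Hg; rewrite /= -/D1 -/D2 => H1 H2.
  have [A1 A2 A3] := @aux6 _ _ _ _ _ H1 H2 D1lo lohi.
  exact: subrange A1 A2 A3.
have [t [Ht1 Ht2 Ht3]] := @pigeon
   (fun t => \sum_(y < N) `[< typeC b h C (y + top b q t * N) >])%N tA tB _ AB Hsum.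
have t0 : (0 < t)%N by exact: (@aux4 _ _ _ D1lo Ht1).
have tq : (t <= q)%N by exact: (@aux5 _ _ _ _ Ht2 hiD2).
exists (top b q t * N), (top b q t * N + N - 1)%N; split; first exact: Hstrict.
rewrite /densityC count_strict //.
have -> : icard (top b q t * N) (top b q t * N + N - 1) = N by rewrite /icard aux7.
have eK : ((tB.+1 - tA) + D2 = icard lo hi + D1)%N by rewrite /icard /tA /tB aux8.
have eKR : (tB.+1 - tA)%:R + D2%:R = (icard lo hi)%:R + D1%:R :> R by rewrite -!natrD eK.
apply: (@final_real R _ _ _ _ _ _ _ ng%:R (tB.+1 - tA)%:R) => //.
- by rewrite ltr0n.
- by rewrite sqrtr_ge0.
- by rewrite ltr0n.
- by rewrite ltr0n subn_gt0 ltnS.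
- exact: (@aux9 R _ _ _ _ _ _ eKR G1b G2a).
- by rewrite -!natrM ler_nat; exact: Ht3.
Qed.
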